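(* Let $Y$ be a complete toric variety with fan $\Sigma_Y$, and let $\Sigma_Y(1)=E_1\sqcup\dots\sqcup E_r\sqcup F$ be a Fano nef partition. Then the rays in $\bigcup_{i=1}^rE_i$ are exactly the rays of a single cone $\sigma\in\Sigma_Y$, and $\sigma$ is a Gorenstein cone, i.e. there is a linear function on $\sigma$ taking the value $1$ on every primitive ray generator of $\sigma$.
   Context: For a set $E$ of rays of $\Sigma_Y$ write $D_E=\sum_{\rho\in E}D_\rho$ for the sum of the corresponding torus-invariant prime divisors. A partition $\Sigma_Y(1)=E_1\sqcup\dots\sqcup E_r\sqcup F$ of the rays is a Fano nef partition if $D_F$ is an ample ($\mathbb{Q}$-Cartier) divisor and each $D_i:=D_{E_i}$ is a nef $\mathbb{Q}$-Cartier divisor. *)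

(* Defs.v *)
From HB Require Import structures.
From mathcomp Require Import all_boot all_order all_algebra.
Set Implicit Arguments. Unset Strict Implicit. Unset Printing Implicit Defensive.
Import Order.TTheory GRing.Theory Num.Theory.
Local Open Scope ring_scope.

(* Lattice N = Z^n, N_Q = Q^n (row vectors); M_Q = dual, paired by dot product. *)
Definition dotQ (n : nat) (m x : 'rV[rat]_n) : rat := \sum_(j < n) m ord0 j * x ord0 j.

Definition toQ (n : nat) (u : 'rV[int]_n) : 'rV[rat]_n := map_mx (fun z : int => z%:~R) u.

Definition primitive (n : nat) (u : 'rV[int]_n) : Prop :=
  u != 0 /\ forall (k : int) (w : 'rV[int]_n), u = k *: w -> `|k| = 1.

(* The rays of the fan are indexed by a finite type I, with primitive generators v i.
   A cone is given by the set S of (indices of) its rays. *)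
Definition in_cone (n : nat) (I : finType) (v : I -> 'rV[int]_n) (S : {set I})
    (x : 'rV[rat]_n) : Prop :=
  exists lam : I -> rat, (forall i, 0 <= lam i) /\ (forall i, i \notin S -> lam i = 0) /\
    x = \sum_i lam i *: toQ (v i).

Definition is_face_of (n : nat) (C F : 'rV[rat]_n -> Prop) : Prop :=
  exists m : 'rV[rat]_n, (forall x, C x -> 0 <= dotQ m x) /\
    (forall x, F x <-> (C x /\ dotQ m x = 0)).

Definition is_fan (n : nat) (I : finType) (v : I -> 'rV[int]_n) (Sigma : {set {set I}}) : Prop :=
  [/\ (forall i, primitive (v i)), injective v & (forall i, [set i] \in Sigma)] /\
  [/\
      (* each S is the minimal generating set of its cone: its rays are exactly S *)
      (forall S, S \in Sigma -> forall i, i \in S -> ~ in_cone v (S :\ i) (toQ (v i))),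
      (forall S, S \in Sigma -> forall x, in_cone v S x -> in_cone v S (- x) -> x = 0),
      (forall S, S \in Sigma -> forall Fc, is_face_of (in_cone v S) Fc ->
          exists2 T, T \in Sigma & forall x, Fc x <-> in_cone v T x) &
      (forall S T, S \in Sigma -> T \in Sigma ->
          is_face_of (in_cone v S) (fun x => in_cone v S x /\ in_cone v T x) /\
          is_face_of (in_cone v T) (fun x => in_cone v S x /\ in_cone v T x))].

Definition complete_fan (n : nat) (I : finType) (v : I -> 'rV[int]_n) (Sigma : {set {set I}}) : Prop :=
  forall x : 'rV[rat]_n, exists2 S, S \in Sigma & in_cone v S x.

Definition maximal_cone (I : finType) (Sigma : {set {set I}}) (S : {set I}) : Prop :=
  S \in Sigma /\ forall T, T \in Sigma -> S \subset T -> T = S.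

(* torus-invariant Q-divisor D = sum_i a i D_i; D_E = sum_{i in E} D_i *)
Definition D_of (I : finType) (E : {set I}) : I -> rat := fun i => if i \in E then 1 else 0.

(* Toric criteria (complete fan; Cox–Little–Schenck Thm 6.1.14, 6.3.12), stated through
   the Cartier data m_sigma (<m_sigma, v_i> = -a_i for i in sigma(1)) of the Q-Cartier
   divisor on maximal cones; existence of this data is the Q-Cartier condition. *)
Definition nef_QCartier (n : nat) (I : finType) (v : I -> 'rV[int]_n) (Sigma : {set {set I}})
    (a : I -> rat) : Prop :=
  forall S, maximal_cone Sigma S -> exists m : 'rV[rat]_n,
    (forall i, i \in S -> dotQ m (toQ (v i)) = - a i) /\
    (forall i, - a i <= dotQ m (toQ (v i))).

Definition ample_QCartier (n : nat) (I : finType) (v : I -> 'rV[int]_n) (Sigma : {set {set I}})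
    (a : I -> rat) : Prop :=
  forall S, maximal_cone Sigma S -> exists m : 'rV[rat]_n,
    (forall i, i \in S -> dotQ m (toQ (v i)) = - a i) /\
    (forall i, i \notin S -> - a i < dotQ m (toQ (v i))).

Definition ray_partition (I : finType) (r : nat) (E : 'I_r -> {set I}) (F : {set I}) : Prop :=
  [/\ (forall i j, i != j -> [disjoint E i & E j]),
      (forall i, [disjoint E i & F]) &
      (\bigcup_(i < r) E i) :|: F = [set: I]].

Definition fano_nef_partition (n : nat) (I : finType) (v : I -> 'rV[int]_n)
    (Sigma : {set {set I}}) (r : nat) (E : 'I_r -> {set I}) (F : {set I}) : Prop :=
  [/\ ray_partition E F,
      ample_QCartier v Sigma (D_of F) &
      (forall i, nef_QCartier v Sigma (D_of (E i)))].

Definition gorenstein_cone (n : nat) (I : finType) (v : I -> 'rV[int]_n) (S : {set I}) : Prop :=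
  exists m : 'rV[rat]_n, forall i, i \in S -> dotQ m (toQ (v i)) = 1.

(* Main.v *)
Require Import Defs.
From HB Require Import structures.
From mathcomp Require Import all_boot all_order all_algebra.
From mathcomp Require Import ring lra.
Set Implicit Arguments. Unset Strict Implicit. Unset Printing Implicit Defensive.
Import Order.TTheory GRing.Theory Num.Theory.
Local Open Scope ring_scope.

Lemma toQ_inj n (u w : 'rV[int]_n) : toQ u = toQ w -> u = w.
Proof.
move=> /matrixP H; apply/matrixP => i j; have := H i j; rewrite !mxE.
exact: intr_inj.
Qed.

Lemma prim_div n (u : 'rV[int]_n) (p : int) : primitive u -> 0 < p ->
  (forall j, (p %| u ord0 j)%Z) -> p = 1.
Proof.
move=> [_ Hp] p0 Hd.
have E : u = p *: map_mx (fun z => (z %/ p)%Z) u.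
  apply/matrixP => i j; rewrite !mxE (ord1 i) mulrC divzK //.
have := Hp p _ E; rewrite gtr0_norm //.
Qed.

Lemma prim_eq n (u w : 'rV[int]_n) (mu : rat) : primitive u -> primitive w -> 0 < mu ->
  toQ u = mu *: toQ w -> u = w.
Proof.
move=> pu pw mu0 E.
set p := numq mu; set q := denq mu.
have cpq : coprimez p q by rewrite coprimezE coprime_num_den.
have Hj : forall j, q * u ord0 j = p * w ord0 j.
  move=> j; move/matrixP: E => /(_ ord0 j); rewrite !mxE => E.
  apply: (@intr_inj rat); rewrite !intrM E -{1}(divq_num_den mu) -/p -/q.
  have : (q%:~R : rat) != 0 by rewrite intr_eq0 gt_eqF ?denq_gt0.
  move=> qn0; by field.
have p1 : p = 1.
  apply: (prim_div pu); first by rewrite /p numq_gt0.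
  move=> j; rewrite -(Gauss_dvdzr _ cpq) Hj; exact: dvdz_mulr.
have q1 : q = 1.
  apply: (prim_div pw); first exact: denq_gt0.
  move=> j; have cqp : coprimez q p by rewrite coprimezE coprime_sym -coprimezE.
  rewrite -(Gauss_dvdzr _ cqp) -Hj; exact: dvdz_mulr.
apply/matrixP => i k; rewrite (ord1 i); have := Hj k; rewrite p1 q1 !mul1r //.
Qed.

Lemma dotQ_add n (m x y : 'rV[rat]_n) : dotQ m (x + y) = dotQ m x + dotQ m y.
Proof. by rewrite /dotQ -big_split; apply: eq_bigr => j _; rewrite mxE mulrDr. Qed.

Lemma dotQ_0 n (m : 'rV[rat]_n) : dotQ m 0 = 0.
Proof. by rewrite /dotQ big1 // => j _; rewrite mxE mulr0. Qed.

Lemma dotQ_scale n (m x : 'rV[rat]_n) c : dotQ m (c *: x) = c * dotQ m x.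
Proof. by rewrite /dotQ mulr_sumr; apply: eq_bigr => j _; rewrite mxE mulrCA. Qed.

Lemma dotQ_sum n (I : finType) (m : 'rV[rat]_n) (F : I -> 'rV[rat]_n) :
  dotQ m (\sum_i F i) = \sum_i dotQ m (F i).
Proof. exact: (big_morph _ (@dotQ_add n m) (dotQ_0 m)). Qed.

Lemma dotQ_addl n (m1 m2 x : 'rV[rat]_n) : dotQ (m1 + m2) x = dotQ m1 x + dotQ m2 x.
Proof. by rewrite /dotQ -big_split; apply: eq_bigr => j _; rewrite mxE mulrDl. Qed.

Lemma dotQ_0l n (x : 'rV[rat]_n) : dotQ 0 x = 0.
Proof. by rewrite /dotQ big1 // => j _; rewrite mxE mul0r. Qed.

Lemma dotQ_oppl n (m x : 'rV[rat]_n) : dotQ (- m) x = - dotQ m x.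
Proof. by rewrite /dotQ -sumrN; apply: eq_bigr => j _; rewrite mxE mulNr. Qed.

Lemma dotQ_suml n (J : finType) (m : J -> 'rV[rat]_n) x :
  dotQ (\sum_k m k) x = \sum_k dotQ (m k) x.
Proof. exact: (big_morph _ (fun a b => @dotQ_addl n a b x) (dotQ_0l x)). Qed.

Lemma dot_cone n (I : finType) (v : I -> 'rV[int]_n) (m : 'rV[rat]_n) (lam : I -> rat) :
  dotQ m (\sum_i lam i *: toQ (v i)) = \sum_i lam i * dotQ m (toQ (v i)).
Proof. by rewrite dotQ_sum; apply: eq_bigr => i _; rewrite dotQ_scale. Qed.

Lemma in_cone_sub n (I : finType) (v : I -> 'rV[int]_n) (S T : {set I}) x :
  S \subset T -> in_cone v S x -> in_cone v T x.
Proof.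
move=> sST [lam [H1 [H2 H3]]]; exists lam; split=> //; split=> // i iT.
by apply: H2; apply: contra iT; apply: (subsetP sST).
Qed.

Lemma in_cone1 n (I : finType) (v : I -> 'rV[int]_n) i x :
  in_cone v [set i] x -> exists2 mu, 0 <= mu & x = mu *: toQ (v i).
Proof.
move=> [lam [H1 [H2 ->]]]; exists (lam i) => //.
rewrite (bigD1 i) //= big1 ?addr0 // => j ji; rewrite H2 ?scale0r //.
by rewrite in_set1.
Qed.

Lemma exists_max (I : finType) (Sigma : {set {set I}}) S : S \in Sigma ->
  exists2 T, maximal_cone Sigma T & S \subset T.
Proof.
move=> SS.
have H0 : S \in [set T in Sigma | S \subset T] by rewrite inE SS subxx.
case: (@arg_maxnP _ S (mem [set T in Sigma | S \subset T]) (fun T : {set I} => #|T|) H0) => T HT Hmax.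
have HT2 : T \in [set T0 in Sigma | S \subset T0] := HT.
move: HT2; rewrite inE => /andP [TS ST].
exists T => //; split=> // T1 T1S sTT1.
apply/eqP; rewrite eq_sym eqEcard sTT1 /=; apply: Hmax.
by rewrite /= inE T1S (subset_trans ST sTT1).
Qed.

Lemma self_in_cone n (I : finType) (v : I -> 'rV[int]_n) (S : {set I}) j :
  j \in S -> in_cone v S (toQ (v j)).
Proof.
move=> jS; exists (fun k => if k == j then 1 else 0); split; first by move=> k; case: eqP.
split; first by move=> k; case: eqP => // ->; rewrite jS.
rewrite (bigD1 j) //= eqxx scale1r big1 ?addr0 // => k /negbTE ->; exact: scale0r.
Qed.

Lemma toQ_neq0 n (u : 'rV[int]_n) : u != 0 -> toQ u != 0.
Proof.
apply: contra => /eqP H; apply/eqP; apply: toQ_inj; rewrite H.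
by apply/matrixP => i j; rewrite !mxE.
Qed.

Lemma ray_mem n (I : finType) (v : I -> 'rV[int]_n) (Sigma : {set {set I}}) S i :
  is_fan v Sigma -> S \in Sigma -> in_cone v S (toQ (v i)) -> i \in S.
Proof.
move=> [[prim inj singl] [mingen sconv faces inter]] SS [lam [l0 [lS lE]]].
have [[m [Hm Hf]] _] := inter S [set i] SS (singl i).
have Hi : in_cone v S (toQ (v i)) by exists lam.
have dm0 : dotQ m (toQ (v i)) = 0.
  by have /Hf [] := conj Hi (self_in_cone v (set11 i)).
have terms : forall j, lam j * dotQ m (toQ (v j)) = 0.
  move: dm0; rewrite {1}lE dot_cone => /eqP; rewrite psumr_eq0.
    by move/allP => H j; apply/eqP; apply: H; rewrite mem_index_enum.
  move=> j _; case: (boolP (j \in S)) => jS; last by rewrite lS // mul0r.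
  by apply: mulr_ge0 => //; apply: Hm; apply: self_in_cone.
case: (pickP (fun j => lam j != 0)) => [j /= lj | H0]; last first.
  have : toQ (v i) != 0 by apply: toQ_neq0; case: (prim i).
  rewrite lE big1 ?eqxx // => j _; have := H0 j; move=> /negbFE /eqP ->.
  exact: scale0r.
have jS : j \in S by apply: contraR lj => jS; rewrite lS.
have dj : dotQ m (toQ (v j)) = 0.
  by have /eqP := terms j; rewrite mulf_eq0 (negbTE lj) /= => /eqP.
have [_ /(in_cone1 (v:=v)) [mu mu0 Emu]] : in_cone v S (toQ (v j)) /\ in_cone v [set i] (toQ (v j)).
  by apply/Hf; split=> //; apply: self_in_cone.
have mupos : 0 < mu.
  rewrite lt_def mu0 andbT; apply/eqP => mu_0.
  have : toQ (v j) != 0 by apply: toQ_neq0; case: (prim j).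
  by rewrite Emu mu_0 scale0r eqxx.
have := prim_eq (prim j) (prim i) mupos Emu => /inj ji.
by rewrite -ji.
Qed.

Theorem lemma11p4 (n : nat) (I : finType) (v : I -> 'rV[int]_n) (Sigma : {set {set I}})
    (r : nat) (E : 'I_r -> {set I}) (F : {set I}) :
  is_fan v Sigma -> complete_fan v Sigma ->
  fano_nef_partition v Sigma E F ->
  exists2 sigma, sigma \in Sigma &
    sigma = \bigcup_(i < r) E i /\ gorenstein_cone v sigma.
Proof.
move=> hfan compl [[disjE disjEF cover] ample nef].
have hfan' := hfan; move: hfan => [[prim inj singl] [mingen sconv faces inter]].
set G := \bigcup_(k < r) E k.
have GF : forall i, i \in G -> D_of F i = 0.
  move=> i /bigcupP [k _ ik]; by rewrite /D_of (disjointFr (disjEF k) ik).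
have GorF : forall i, i \notin G -> D_of F i = 1.
  move=> i iG; have : i \in [set: I] by [].
  by rewrite -cover inE (negbTE iG) /= /D_of => ->.
have D01 : forall i, 0 <= D_of F i <= 1 by move=> i; rewrite /D_of; case: ifP.
set x := \sum_i (if i \in G then 1 else 0) *: toQ (v i).
have [S0 S0S xS0] := compl x.
have [S Smax sS0S] := exists_max S0S.
have SS : S \in Sigma by case: Smax.
have [mF [mFS mFn]] := ample S Smax.
have keydot : forall lam : I -> rat, (forall i, i \notin S -> lam i = 0) ->
    dotQ mF (\sum_i lam i *: toQ (v i)) = - \sum_i lam i * D_of F i.
  move=> lam lS; rewrite dot_cone -sumrN; apply: eq_bigr => i _.
  case: (boolP (i \in S)) => iS; first by rewrite mFS // mulrN.
  by rewrite lS // !mul0r oppr0.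
have GS : G \subset S.
  have [lam [l0 [lS lE]]] := in_cone_sub sS0S xS0.
  have le0 : dotQ mF x <= 0.
    rewrite lE keydot // oppr_le0; apply: sumr_ge0 => i _.
    by apply: mulr_ge0 => //; case/andP: (D01 i).
  have tge0 : forall i, 0 <= (if i \in G then 1 else 0) * dotQ mF (toQ (v i)).
    move=> i; case: (boolP (i \in G)) => iG; last by rewrite mul0r.
    rewrite mul1r; case: (boolP (i \in S)) => iS.
      by rewrite mFS // GF // oppr0.
    by apply: ltW; have := mFn i iS; rewrite GF // oppr0.
  have sum0 : \sum_i (if i \in G then 1 else 0) * dotQ mF (toQ (v i)) = 0.
    apply/eqP; rewrite eq_le; apply/andP; split; last exact: sumr_ge0.
    by rewrite -dot_cone.
  apply/subsetP => g gG; apply/negPn/negP => gS.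
  have := psumr_eq0P (fun i _ => tge0 i) sum0 (i := g) isT.
  rewrite gG mul1r => d0; have := mFn g gS; by rewrite GF // oppr0 d0 ltxx.
have face : is_face_of (in_cone v S) (in_cone v G).
  exists (- mF); split.
    move=> y [lam [l0 [lS ->]]]; rewrite dotQ_oppl keydot // opprK.
    apply: sumr_ge0 => i _; by apply: mulr_ge0 => //; case/andP: (D01 i).
  move=> y; split.
    move=> Hy; split; first exact: in_cone_sub GS Hy.
    move: Hy => [lam [l0 [lS ->]]].
    rewrite dotQ_oppl keydot ?opprK; last first.
      by move=> i iS; apply: lS; apply: contra iS; apply: (subsetP GS).
    apply: big1 => i _; case: (boolP (i \in G)) => iG; first by rewrite GF // mulr0.
    by rewrite lS // mul0r.
  move=> [[lam [l0 [lS lE]]]]; rewrite lE dotQ_oppl keydot // opprK => s0.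
  exists lam; split=> //; split=> // i iG.
  have := psumr_eq0P (P := xpredT) (fun i _ => mulr_ge0 (l0 i) (proj1 (andP (D01 i)))) s0 (i := i) isT.
  by rewrite GorF // mulr1.
have [T TS HT] := faces S SS _ face.
have TG : T = G.
  apply/setP => i; apply/idP/idP => iT.
    have /HT iG := self_in_cone v iT.
    have iS : i \in S by apply: (ray_mem hfan' SS); apply: in_cone_sub GS iG.
    apply/negPn/negP => niG; apply: (mingen S SS i iS).
    apply: in_cone_sub iG; apply/subsetP => j jG; rewrite !inE (subsetP GS) // andbT.
    by apply: contraNneq niG => <-.
  apply: (ray_mem hfan' TS); apply/HT; exact: self_in_cone.
exists T => //; split => //; rewrite TG.
have [mk Hmk] := fin_all_exists (fun k => nef k S Smax).
exists (- \sum_k mk k) => g gG.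
rewrite dotQ_oppl dotQ_suml -sumrN.
have gS : g \in S := subsetP GS g gG.
under eq_bigr => k _ do rewrite (proj1 (Hmk k)) // opprK.
move: gG => /bigcupP [k0 _ gk0].
rewrite (bigD1 k0) //= big1 ?addr0; first by rewrite /D_of gk0.
move=> k kk0; rewrite /D_of; case: ifP => // gk.
by have := disjointFr (disjE k k0 kk0) gk; rewrite gk0.
Qed.
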